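(* Let $X$ be a nonempty compact metric space, $Y$ a compact metric space and $\mathcal Y$ an $(X)$-regularizing family for $Y$. Then every point $p\in Y$ is the limit of some sequence $(Z_n)$ of pairwise distinct members of $\mathcal Y$, i.e. for some (equivalently, every) choice of points $p_n\in Z_n$ we have $p_n\to p$.
   Context: An $(X)$-regularizing family for $Y$ is a countably infinite family $\mathcal Y$ of subsets of $Y$ such that: (a1) the members are pairwise disjoint subspaces homeomorphic to $X$; (a2) $\mathcal Y$ is null (for every $\varepsilon>0$ only finitely many members have diameter $\ge\varepsilon$); (a3) each member has dense complement in $Y$; (a4) $\bigcup\mathcal Y$ is dense in $Y$; (a5) any two points not in a common member of $\mathcal Y$ are separated by an open, closed, $\mathcal Y$-saturated subset of $Y$ (each member is contained in it or disjoint from it). *)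

(* Defs.v *)
From HB Require Import structures.
From mathcomp Require Import all_boot all_order all_algebra.
From mathcomp Require Import all_classical all_reals all_analysis.
Set Implicit Arguments. Unset Strict Implicit. Unset Printing Implicit Defensive.
Import Order.TTheory GRing.Theory Num.Theory.
Local Open Scope classical_set_scope.
Local Open Scope ring_scope.

Definition diam {R : realType} {Y : metricType R} (A : set Y) : R :=
  sup [set mdist x y | x in A & y in A].

Definition homeomorphic_to {X Y : topologicalType} (A : set Y) : Prop :=
  exists (f : X -> Y) (g : Y -> X),
    [/\ continuous f, f @` setT = A, {within A, continuous g},
        (forall x, g (f x) = x) & (forall y, A y -> f (g y) = y)].

Definition saturated {Y : Type} (F : set (set Y)) (U : set Y) : Prop :=
  forall Z, F Z -> Z `<=` U \/ Z `&` U = set0.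

Definition regularizing_family {R : realType} (X : topologicalType)
    (Y : metricType R) (F : set (set Y)) : Prop :=
  (F #= [set: nat])%card /\
  [/\
      ((forall Z, F Z -> @homeomorphic_to X Y Z) /\
       (forall Z1 Z2, F Z1 -> F Z2 -> Z1 <> Z2 -> Z1 `&` Z2 = set0)),
      (forall eps : R, 0 < eps -> finite_set [set Z | F Z /\ eps <= diam Z]),
      (forall Z, F Z -> dense (setC Z)),
      dense (\bigcup_(Z in F) Z) &
      (forall x y : Y, x <> y -> ~ (exists Z, [/\ F Z, Z x & Z y]) ->
        exists U : set Y, [/\ open U, closed U, saturated F U, U x & ~ U y])].

(* Main.v *)
Require Import Defs.
From HB Require Import structures.
From mathcomp Require Import all_boot all_order all_algebra.
From mathcomp Require Import all_classical all_reals all_analysis.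
From mathcomp Require Import lra.
Import Order.TTheory GRing.Theory Num.Theory.
Local Open Scope classical_set_scope.
Local Open Scope ring_scope.

Lemma mdist_cont (R : realType) (Y : metricType R) (y0 : Y) :
  continuous (fun x : Y => (mdist y0 x : R^o)).
Proof.
move=> x0; apply/cvgrPdist_lt => e e0.
near=> x.
have : ball x0 e x by near: x; exact: nbhsx_ballx.
rewrite ballEmdist /= => hx.
have h1 := metric_triangle y0 x0 x.
have h2 := metric_triangle y0 x x0.
rewrite (metric_sym x x0) in h2.
rewrite ltr_distl; apply/andP; split; lra.
Unshelve. all: by end_near.
Qed.

Lemma mdist_bdd (R : realType) (Y : metricType R) :
  compact [set: Y] -> exists M, forall x y : Y, mdist x y <= M.
Proof.
move=> cY.
have [y0|Y0] := pselect (exists y : Y, True); last first.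
  by exists 0 => x; exfalso; apply: Y0; exists x.
case: y0 => y0 _.
have := compact_bounded (continuous_compact (continuous_subspaceT (@mdist_cont R Y y0)) cY).
move=> [M [_ HM]].
exists ((M + 1) * 2) => x y.
have hx : `|mdist y0 x| <= M + 1 by apply: (HM (M + 1)); [lra| exists x].
have hy : `|mdist y0 y| <= M + 1 by apply: (HM (M + 1)); [lra| exists y].
rewrite ger0_norm ?mdist_ge0 // in hx.
rewrite ger0_norm ?mdist_ge0 // in hy.
have := metric_triangle x y0 y; rewrite (metric_sym x y0); lra.
Qed.

Lemma remove_closed (Y : topologicalType) (s : seq (set Y)) (U : set Y) :
  open U -> U !=set0 -> (forall Z, Z \in s -> closed Z /\ dense (~` Z)) ->
  exists V : set Y, [/\ open V, V !=set0, V `<=` U &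
    forall Z, Z \in s -> V `&` Z = set0].
Proof.
elim: s U => [|Z s IH] U oU U0 hs.
  by exists U; split => // Z; rewrite in_nil.
have [cZ dZ] := hs Z (mem_head _ _).
have oUZ : open (U `&` ~` Z) by apply: openI => //; exact: closed_openC.
have UZ0 : (U `&` ~` Z) !=set0 by exact: dZ.
have hs2 : forall Z', Z' \in s -> closed Z' /\ dense (~` Z') by move=> Z' hZ'; apply: hs; rewrite in_cons hZ' orbT.
have [V [oV V0 VU VZ]] := IH _ oUZ UZ0 hs2.
exists V; split => //; first by move=> x /VU [].
move=> Z'; rewrite in_cons => /orP [/eqP ->|hZ']; last exact: VZ.
by apply/seteqP; split => // x [/VU [_ nZ] Zx].
Qed.

Theorem fact2 (R : realType) (X Y : metricType R) (F : set (set Y)) :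
  [set: X] !=set0 -> compact [set: X] -> compact [set: Y] ->
  regularizing_family X F ->
  forall p : Y, exists Zs : nat -> set Y,
    [/\ forall n, F (Zs n), injective Zs &
        forall q : nat -> Y, (forall n, Zs n (q n)) -> q n @[n --> \oo] --> p].
Proof.
move=> X0 cX cY [_ [[hom disj] null a3 a4 _]] p.
have [M HM] := @mdist_bdd R Y cY.
have Zcl : forall Z, F Z -> closed Z.
  move=> Z /hom [f [g [fc fim _ _ _]]]; rewrite -fim.
  apply: compact_closed; first exact: metric_hausdorff.
  exact: continuous_compact (continuous_subspaceT fc) cX.
have diamP : forall (Z : set Y) (x y : Y), Z x -> Z y -> mdist x y <= diam Z.
  move=> Z x y Zx Zy; rewrite /diam.
  have hub : has_ubound [set mdist a b | a in Z & b in Z].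
    by exists M => _ [a _ [b _ <-]]; exact: HM.
  by apply: (ub_le_sup hub); exists x => //; exists y.
pose e (n : nat) : R := (n.+1%:R)^-1.
have e0 : forall n, 0 < e n by move=> n; rewrite /e invr_gt0.
have key : forall ns : nat * seq (set Y), exists Z,
    [/\ F Z, Z \notin ns.2, (exists y, Z y /\ mdist p y < e ns.1) &
        diam Z < e ns.1].
  case=> n s /=.
  apply: contrapT => /forallNP H.
  pose G := [set Z | F Z /\ e n <= diam Z] `|` ([set` s] `&` F).
  have fG : finite_set G.
    rewrite finite_setU; split; first exact: null.
    exact: (sub_finite_set (@subIsetl _ _ _) (finite_seq s)).
  have [s' Gs'] := (finite_seqP G).1 fG.
  have hs' : forall Z, Z \in s' -> closed Z /\ dense (~` Z).
    move=> Z hZ; have : G Z by rewrite Gs'.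
    by move=> [[FZ _]|[_ FZ]]; split; [exact: Zcl|exact: a3|exact: Zcl|exact: a3].
  have [V [oV V0 VU VZ]] := @remove_closed Y s' _ (open_interior (ball p (e n)))
     (ex_intro _ p (nbhsx_ballx p (e n) (e0 n))) hs'.
  have [y [Vy [Z FZ Zy]]] := a4 V V0 oV.
  have yb : mdist p y < e n.
    by have := interior_subset (VU y Vy); rewrite ballEmdist.
  have GZ : G Z.
    case: (boolP (Z \in s)) => hZs; first by right; split.
    case: (ltP (diam Z) (e n)) => hd; last by left.
    by exfalso; apply: (H Z); split => //; exists y.
  have : Z \in s' by rewrite Gs' in GZ.
  by move=> /VZ /seteqP [/(_ y) + _] => /(_ (conj Vy Zy)).
have [pick Hpick] := choice key.
pose L := fix L n := if n is m.+1 then pick (m, L m) :: L m else [::].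
pose Zs n := pick (n, L n).
have inL : forall m n, (m < n)%N -> Zs m \in L n.
  move=> m; elim=> // n IH; rewrite ltnS leq_eqVlt => /orP [/eqP ->|hmn] /=.
    by rewrite mem_head.
  by rewrite in_cons IH ?orbT.
exists Zs; split.
- by move=> n; have [] := Hpick (n, L n).
- move=> m n hZ; case: (ltngtP m n) => // hmn; exfalso.
  + have [_ hn _ _] := Hpick (n, L n).
    by move: (inL m n hmn); rewrite hZ => h; move/negP: hn; apply.
  + have [_ hm _ _] := Hpick (m, L m).
    by move: (inL n m hmn); rewrite -hZ => h; move/negP: hm; apply.
- move=> q hq; apply/cvg_ballP => eps eps0.
  have eps2 : 0 < eps / 2 by rewrite divr_gt0.
  have := near_infty_natSinv_lt (PosNum eps2).
  apply: filterS => n /= hn.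
  have [_ _ [y [Zy py]] hd] := Hpick (n, L n).
  rewrite /= -/(e n) in py hd.
  have h1 := diamP _ _ _ Zy (hq n).
  have h2 := metric_triangle p y (q n).
  rewrite ballEmdist /=.
  rewrite /e in py hd h1 h2.
  set d := diam _ in hd h1. set E := _^-1 in py hd hn. lra.
Qed.
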